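(* Let $\mathbf z\in\mathbb{R}^{\rho(n_u+n_y)}$ be fixed, $\varphi:\mathbb{R}^{\rho(n_u+n_y)}\times\mathbb{R}^{n_uT}\to\mathbb{R}^{n_\varphi}$ a regression map, $Y\in\mathbb{R}^{n_yT\times N}$, $\Phi\in\mathbb{R}^{n_\varphi\times N}$ training data matrices, $\widehat\Theta\in\mathbb{R}^{n_yT\times n_\varphi}$, and define $\Sigma_\Delta=\frac1N(Y-\widehat\Theta\Phi)(Y-\widehat\Theta\Phi)^\top$ and $\Sigma_\varphi=\frac1N\Phi\Phi^\top$. Let $Q\in\mathbb{R}^{n_yT\times n_yT}$ and $R\in\mathbb{R}^{n_uT\times n_uT}$ be positive definite, $\bar{\mathbf y}\in\mathbb{R}^{n_yT}$, $\bar{\mathbf u}\in\mathbb{R}^{n_uT}$ references, $J(\mathbf u,\hat{\mathbf y})=\|\hat{\mathbf y}-\bar{\mathbf y}\|_Q^2+\|\mathbf u-\bar{\mathbf u}\|_R^2$, and $\lambda_1,\lambda_2\ge0$. Assume $\Sigma_\Delta$ and $\Sigma_\varphi$ are positive definite. Consider the unconstrained problem $$\min_{\mathbf u,\,\Delta\hat{\mathbf y}}\; J(\mathbf u,\hat{\mathbf y})+\frac{\lambda_1}{N}\|\varphi(\mathbf z,\mathbf u)\|^2_{\Sigma_\varphi^{-1}}+\frac{\lambda_2}{N}\|\Delta\hat{\mathbf y}\|^2_{\Sigma_\Delta^{-1}}\quad\text{s.t.}\quad \hat{\mathbf y}=\widehat\Theta\varphi(\mathbf z,\mathbf u)+\Delta\hat{\mathbf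 y}.$$ Then this problem gives the same optimal $\mathbf u$ as $$\min_{\mathbf u}\; \|\bar{\mathbf y}-\widehat\Theta\varphi(\mathbf z,\mathbf u)\|^2_{\widetilde Q}+\|\bar{\mathbf u}-\mathbf u\|_R^2+\frac{\lambda_1}{N}\|\varphi(\mathbf z,\mathbf u)\|^2_{\Sigma_\varphi^{-1}},$$ where $\widetilde Q=Q-Q\big(Q+\frac{\lambda_2}{N}\Sigma_\Delta^{-1}\big)^{-1}Q\preceq Q$.
   Context: For a vector $x$ and symmetric matrix $W$, $\|x\|_W^2=x^\top Wx$. $A\preceq B$ means $B-A$ is positive semidefinite. *)

(* Defs.v *)
From HB Require Import structures.
From mathcomp Require Import all_boot all_order all_algebra.
Set Implicit Arguments. Unset Strict Implicit. Unset Printing Implicit Defensive.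
Import Order.TTheory GRing.Theory Num.Theory.
Local Open Scope ring_scope.

Definition wnorm2 {R : realFieldType} {n : nat} (W : 'M[R]_n) (x : 'cV[R]_n) : R :=
  (x^T *m W *m x) 0 0.

Definition posdef {R : realFieldType} {n : nat} (A : 'M[R]_n) : Prop :=
  A^T = A /\ forall x : 'cV[R]_n, x != 0 -> 0 < wnorm2 A x.

Definition possemidef {R : realFieldType} {n : nat} (A : 'M[R]_n) : Prop :=
  A^T = A /\ forall x : 'cV[R]_n, 0 <= wnorm2 A x.

Definition loewner_le {R : realFieldType} {n : nat} (A B : 'M[R]_n) : Prop :=
  possemidef (B - A).

Definition SigmaDelta {R : realFieldType} {m p N : nat}
  (Y : 'M[R]_(m, N)) (Theta : 'M[R]_(m, p)) (Phi : 'M[R]_(p, N)) : 'M[R]_m :=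
  (N%:R)^-1 *: ((Y - Theta *m Phi) *m (Y - Theta *m Phi)^T).

Definition SigmaPhi {R : realFieldType} {p N : nat} (Phi : 'M[R]_(p, N)) : 'M[R]_p :=
  (N%:R)^-1 *: (Phi *m Phi^T).

(* Main.v *)
Require Import Defs.
From HB Require Import structures.
From mathcomp Require Import all_boot all_order all_algebra.
From mathcomp Require Import ring lra.
Import Order.TTheory GRing.Theory Num.Theory.
Local Open Scope ring_scope.

Definition bil {R : realFieldType} {n : nat} (W : 'M[R]_n) (x y : 'cV[R]_n) : R :=
  (x^T *m W *m y) 0 0.

Lemma entD (R : realFieldType) m n (A B : 'M[R]_(m,n)) i j : (A + B) i j = A i j + B i j.
Proof. by rewrite mxE. Qed.
Lemma entN (R : realFieldType) m n (A : 'M[R]_(m,n)) i j : (- A) i j = - A i j.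
Proof. by rewrite mxE. Qed.
Lemma entZ (R : realFieldType) m n c (A : 'M[R]_(m,n)) i j : (c *: A) i j = c * A i j.
Proof. by rewrite mxE. Qed.

Lemma mtrD (R : realFieldType) m n (A B : 'M[R]_(m,n)) : (A + B)^T = A^T + B^T.
Proof. by apply/matrixP => i j; rewrite !mxE. Qed.
Lemma mtrN (R : realFieldType) m n (A : 'M[R]_(m,n)) : (- A)^T = - A^T.
Proof. by apply/matrixP => i j; rewrite !mxE. Qed.
Lemma mtrZ (R : realFieldType) m n c (A : 'M[R]_(m,n)) : (c *: A)^T = c *: A^T.
Proof. by apply/matrixP => i j; rewrite !mxE. Qed.

Lemma wn_add (R : realFieldType) n (W : 'M[R]_n) x y :
  wnorm2 W (x + y) = wnorm2 W x + bil W x y + bil W y x + wnorm2 W y.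
Proof.
rewrite /wnorm2 /bil mtrD !mulmxDl !mulmxDr !entD; ring.
Qed.

Lemma wn_opp (R : realFieldType) n (W : 'M[R]_n) x : wnorm2 W (- x) = wnorm2 W x.
Proof. by rewrite /wnorm2 mtrN mulNmx mulmxN mulNmx opprK. Qed.

Lemma wn_addW (R : realFieldType) n (A B : 'M[R]_n) x :
  wnorm2 (A + B) x = wnorm2 A x + wnorm2 B x.
Proof. by rewrite /wnorm2 mulmxDr mulmxDl entD. Qed.

Lemma wn_oppW (R : realFieldType) n (A : 'M[R]_n) x :
  wnorm2 (- A) x = - wnorm2 A x.
Proof. by rewrite /wnorm2 mulmxN mulNmx entN. Qed.

Lemma wn_scaleW (R : realFieldType) n c (A : 'M[R]_n) x :
  wnorm2 (c *: A) x = c * wnorm2 A x.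
Proof. by rewrite /wnorm2 -scalemxAr -scalemxAl entZ. Qed.

Lemma wn0 (R : realFieldType) n (A : 'M[R]_n) : wnorm2 A 0 = 0.
Proof. by rewrite /wnorm2 mulmx0 mxE. Qed.

Lemma pd_unit (R : realFieldType) n (A : 'M[R]_n) :
  posdef A -> A \in unitmx.
Proof.
move=> [AT Apos]; rewrite unitmxE unitfE; apply/negP => /det0P [v v0 vA].
have := Apos v^T; rewrite trmx_eq0 => /(_ v0).
have -> : wnorm2 A v^T = 0.
  have h : A *m v^T = 0 by rewrite -{1}AT -trmx_mul vA trmx0.
  by rewrite /wnorm2 -mulmxA h mulmx0 mxE.
by rewrite ltxx.
Qed.

Lemma pd_ge0 (R : realFieldType) n (A : 'M[R]_n) x : posdef A -> 0 <= wnorm2 A x.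
Proof.
move=> [_ Ap]; have [->|x0] := eqVneq x 0; first by rewrite wn0.
exact/ltW/Ap.
Qed.

Lemma inv_sym (R : realFieldType) n (A : 'M[R]_n) : A^T = A -> (invmx A)^T = invmx A.
Proof. by move=> AT; rewrite trmx_inv AT. Qed.

Lemma inv_ge0 (R : realFieldType) n (A : 'M[R]_n) x :
  A^T = A -> A \in unitmx -> (forall y, 0 <= wnorm2 A y) -> 0 <= wnorm2 (invmx A) x.
Proof.
move=> AT Au Ap.
have -> : wnorm2 (invmx A) x = wnorm2 A (invmx A *m x).
  by rewrite /wnorm2 trmx_mul inv_sym // -!mulmxA mulKVmx.
exact: Ap.
Qed.

Lemma complete_sq (R : realFieldType) n (Q S : 'M[R]_n) c a d :
  Q^T = Q -> S^T = S -> (Q + c *: S) \in unitmx ->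
  wnorm2 Q (a + d) + c * wnorm2 S d =
  wnorm2 (Q - Q *m invmx (Q + c *: S) *m Q) a
  + wnorm2 (Q + c *: S) (d + invmx (Q + c *: S) *m Q *m a).
Proof.
move=> QT ST Mu.
set M := Q + c *: S.
have MT : M^T = M by rewrite /M mtrD mtrZ QT ST.
set Mi := invmx M.
have MiT : Mi^T = Mi by rewrite /Mi inv_sym.
set b := Mi *m Q *m a.
have h1 : bil M d b = bil Q d a.
  by rewrite /bil /b !mulmxA -(mulmxA _ M Mi) mulmxV // mulmx1.
have h2 : bil M b d = bil Q a d.
  rewrite /bil /b !trmx_mul MiT QT !mulmxA -(mulmxA _ Mi M) mulVmx // mulmx1.
  done.
have h3 : wnorm2 M b = wnorm2 (Q *m Mi *m Q) a.
  rewrite /wnorm2 /b !trmx_mul MiT QT !mulmxA -(mulmxA _ Mi M) mulVmx // mulmx1.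
  done.
have h4 : wnorm2 M d = wnorm2 Q d + c * wnorm2 S d by rewrite /M wn_addW wn_scaleW.
rewrite wn_add [wnorm2 M (d + b)]wn_add h1 h2 h3 h4 wn_addW wn_oppW.
ring.
Qed.

Theorem corollary1 (R : realFieldType) (rho nu ny T nphi N : nat)
  (z : 'cV[R]_(rho * (nu + ny)))
  (phi : 'cV[R]_(rho * (nu + ny)) -> 'cV[R]_(nu * T) -> 'cV[R]_nphi)
  (Y : 'M[R]_(ny * T, N)) (Phi : 'M[R]_(nphi, N)) (Theta : 'M[R]_(ny * T, nphi))
  (Q : 'M[R]_(ny * T)) (Rw : 'M[R]_(nu * T))
  (ybar : 'cV[R]_(ny * T)) (ubar : 'cV[R]_(nu * T)) (lam1 lam2 : R) :
  (0 < N)%N ->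
  posdef Q -> posdef Rw -> 0 <= lam1 -> 0 <= lam2 ->
  posdef (SigmaDelta Y Theta Phi) -> posdef (SigmaPhi Phi) ->
  let J := fun (u : 'cV[R]_(nu * T)) (yh : 'cV[R]_(ny * T)) =>
             wnorm2 Q (yh - ybar) + wnorm2 Rw (u - ubar) in
  let F1 := fun (u : 'cV[R]_(nu * T)) (dy : 'cV[R]_(ny * T)) =>
             J u (Theta *m phi z u + dy)
             + lam1 / N%:R * wnorm2 (invmx (SigmaPhi Phi)) (phi z u)
             + lam2 / N%:R * wnorm2 (invmx (SigmaDelta Y Theta Phi)) dy in
  let Qt := Q - Q *m invmx (Q + (lam2 / N%:R) *: invmx (SigmaDelta Y Theta Phi)) *m Q in
  let F2 := fun (u : 'cV[R]_(nu * T)) =>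
             wnorm2 Qt (ybar - Theta *m phi z u) + wnorm2 Rw (ubar - u)
             + lam1 / N%:R * wnorm2 (invmx (SigmaPhi Phi)) (phi z u) in
  (forall u : 'cV[R]_(nu * T),
     (exists dy : 'cV[R]_(ny * T),
        forall (u' : 'cV[R]_(nu * T)) (dy' : 'cV[R]_(ny * T)), F1 u dy <= F1 u' dy')
     <-> (forall u' : 'cV[R]_(nu * T), F2 u <= F2 u'))
  /\ loewner_le Qt Q.
Proof.
move=> N0 Qpd Rpd l1 l2 Spd _; cbv zeta.
set Sig := SigmaDelta Y Theta Phi in Spd *.
set S := invmx Sig.
set c := lam2 / N%:R.
set L := fun u => lam1 / N%:R * wnorm2 (invmx (SigmaPhi Phi)) (phi z u).
set F1 := fun u dy => wnorm2 Q (Theta *m phi z u + dy - ybar) + wnorm2 Rw (u - ubar) + L u + c * wnorm2 S dy.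
set M := Q + c *: S.
set Qt := Q - Q *m invmx M *m Q.
set F2 := fun u => wnorm2 Qt (ybar - Theta *m phi z u) + wnorm2 Rw (ubar - u) + L u.
change ((forall u, (exists dy, forall u' dy', F1 u dy <= F1 u' dy') <-> (forall u', F2 u <= F2 u')) /\ loewner_le Qt Q).
have c0 : 0 <= c by rewrite /c divr_ge0 // ler0n.
have QT : Q^T = Q by case: Qpd.
have ST : S^T = S by rewrite /S inv_sym //; case: Spd.
have Sge : forall x, 0 <= wnorm2 S x.
  move=> x; apply: inv_ge0; first by case: Spd.
    exact: pd_unit.
  by move=> y; apply: pd_ge0.
have MT : M^T = M by rewrite /M mtrD mtrZ QT ST.
have Mpd : posdef M.
  split => // x x0; rewrite /M wn_addW wn_scaleW.
  have := Sge x; have := (Qpd.2 x x0); move=> h1 h2.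
  by rewrite ltr_wpDr // mulr_ge0.
have Mu : M \in unitmx by exact: pd_unit.
pose a u := Theta *m phi z u - ybar.
pose b u := invmx M *m Q *m a u.
have key : forall u dy, F1 u dy = F2 u + wnorm2 M (dy + b u).
  move=> u dy; rewrite /F1 /F2.
  have -> : Theta *m phi z u + dy - ybar = a u + dy by rewrite /a addrAC.
  have -> : ybar - Theta *m phi z u = - a u by rewrite /a opprB.
  have -> : ubar - u = - (u - ubar) by rewrite opprB.
  rewrite !wn_opp.
  have := @complete_sq _ _ Q S c (a u) dy QT ST Mu.
  rewrite -/M /Qt -/(b u) => e.
  move: e; set X := wnorm2 Q _; set Y1 := wnorm2 S dy; move=> e.
  have -> : X = wnorm2 (Q - Q *m invmx M *m Q) (a u) + wnorm2 M (dy + b u) - c * Y1 by rewrite -e; ring.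
  ring.
have Mge : forall x, 0 <= wnorm2 M x by move=> x; apply: pd_ge0.
have lo : forall u dy, F2 u <= F1 u dy.
  by move=> u dy; rewrite key lerDl.
have at_b : forall u, F1 u (- b u) = F2 u.
  by move=> u; rewrite key addNr wn0 addr0.
split.
  move=> u; split.
    move=> [dy H] u'; apply: (le_trans (lo u dy)).
    by rewrite -(at_b u'); apply: H.
  move=> H; exists (- b u) => u' dy'.
  by rewrite at_b; apply: (le_trans (H u')).
rewrite /loewner_le.
have -> : Q - Qt = Q *m invmx M *m Q by rewrite /Qt opprB addrC subrK.
split.
  by rewrite !trmx_mul inv_sym // QT mulmxA.
move=> x.
have -> : wnorm2 (Q *m invmx M *m Q) x = wnorm2 (invmx M) (Q *m x).
  by rewrite /wnorm2 trmx_mul QT !mulmxA.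
by apply: inv_ge0.
Qed.
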